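(* Let $p\ge 1$. (1) For $n\ge1$ and $x_1,\dots,x_n\in\mathbb{R}$, the map $t\mapsto s_p^p(x_1,\dots,x_n,t)$ is convex, decreasing on $\mathbb{R}_-$ and increasing on $\mathbb{R}_+$. (2) For $n\ge 1$ and $x_1,\dots,x_{n+1}\in\mathbb{R}$, $s_p^p(x_1,\dots,x_{n+1})-s_p^p(x_1,\dots,x_n)\ge|x_{n+1}|^p$ in all cases, and $\ge p|x_n|^{p-1}|x_{n+1}|$ if $x_{n+1}$ and $x_n$ have the same sign. (3) Symmetrically, the map $t\mapsto s_p^p(t,x_1,\dots,x_n)$ is convex, decreasing on $\mathbb{R}_-$ and increasing on $\mathbb{R}_+$, and for $x_0,x_1,\dots,x_n\in\mathbb{R}$, $s_p^p(x_0,x_1,\dots,x_n)-s_p^p(x_1,\dots,x_n)\ge|x_0|^p$ in all cases and $\ge p|x_1|^{p-1}|x_0|$ if $x_0$ and $x_1$ have the same sign.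
   Context: For a finite real sequence $x=(x_1,\dots,x_n)$, the maximal $p$-sum is $s_p(x)=\big(\sup_{k\le n}\sup_{0=i_0<\dots<i_k=n}\sum_{j=0}^{k-1}\big|\sum_{\ell=i_j+1}^{i_{j+1}}x_\ell\big|^p\big)^{1/p}$. *)

(* Defs.v *)
From HB Require Import structures.
From mathcomp Require Import all_boot all_order all_algebra.
From mathcomp Require Import all_classical all_reals.
From mathcomp Require Import exp.
Set Implicit Arguments. Unset Strict Implicit. Unset Printing Implicit Defensive.
Import Order.TTheory GRing.Theory Num.Theory.
Local Open Scope ring_scope.
Local Open Scope classical_set_scope.

(* A partition 0 = i_0 < i_1 < ... < i_k = n of {1..n} into consecutive
   nonempty blocks is encoded by the list of block lengths
   r = [:: i_1 - i_0; ...; i_k - i_(k-1)] (all positive, summing to n). *)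
Definition is_partition (n : nat) (r : seq nat) : bool :=
  all (fun l => 0 < l)%N r && (sumn r == n).

Definition psum {R : realType} (p : R) (x : seq R) (r : seq nat) : R :=
  \sum_(b <- reshape r x) `| \sum_(y <- b) y | `^ p.

Definition sp_pow {R : realType} (p : R) (x : seq R) : R :=
  sup [set v | exists r, is_partition (size x) r /\ v = psum p x r].

Definition s_p {R : realType} (p : R) (x : seq R) : R := sp_pow p x `^ p^-1.

Definition convex_fun {R : realType} (f : R -> R) : Prop :=
  forall a b (l : R), 0 <= l <= 1 ->
    f (l * a + (1 - l) * b) <= l * f a + (1 - l) * f b.

Definition decr_neg {R : realType} (f : R -> R) : Prop :=
  forall a b : R, a <= b -> b <= 0 -> f b <= f a.

Definition incr_pos {R : realType} (f : R -> R) : Prop :=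
  forall a b : R, 0 <= a -> a <= b -> f a <= f b.

(* Main.v *)
Require Import Defs.
From HB Require Import structures.
From mathcomp Require Import all_boot all_order all_algebra.
From mathcomp Require Import all_classical all_reals.
From mathcomp Require Import exp.
From mathcomp Require Import ring lra zify.
Import Order.TTheory GRing.Theory Num.Theory.
Local Open Scope ring_scope.



Section Helpers.
Variable R : realType.
Variable p : R.
Hypothesis hp : 1 <= p.

Let p0 : 0 < p. Proof. exact: lt_le_trans ltr01 hp. Qed.

Lemma tangentP (u x : R) : 0 <= u -> 0 <= x ->
  u `^ p + p * u `^ (p - 1) * (x - u) <= x `^ p.
Proof.
move=> u0 x0.
have [->|p1] := eqVneq p 1.
  rewrite subrr powRr0 !powRr1 //; lra.
have hp1 : 1 < p by rewrite lt_neqAle eq_sym p1 hp.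
pose q := p / (p - 1).
have pm0 : 0 < p - 1 by rewrite subr_gt0.
have q0 : 0 < q by rewrite divr_gt0.
have pq : p^-1 + q^-1 = 1.
  by rewrite /q invf_div -{1}(div1r p) -mulrDl subrKC mulfV// gt_eqF.
have := conjugate_powR x0 (powR_ge0 u (p - 1)) p0 q0 pq.
rewrite -powRrM (_ : (p - 1) * q = p); last first.
  by rewrite /q mulrCA mulfV ?mulr1 // gt_eqF.
have e : p * u `^ (p - 1) * u = p * u `^ p by rewrite -mulrA (mulrC _ u) mulr_powRB1.
have e2 : u `^ p / q = (p - 1) / p * u `^ p.
  by rewrite /q invf_div mulrC.
rewrite e2 => H.
have H2 : x * u `^ (p - 1) * p <= x `^ p + (p - 1) * u `^ p.
  by move: H; rewrite -mulrAC -mulrDl ler_pdivlMr.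
rewrite mulrBr e.
have -> : p * u `^ (p - 1) * x = x * u `^ (p - 1) * p by rewrite mulrC (mulrC p) mulrA.
lra.
Qed.

End Helpers.



Section Helpers2.
Variable R : realType.
Variable p : R.
Hypothesis hp : 1 <= p.

Let p0 : 0 < p. Proof. exact: lt_le_trans ltr01 hp. Qed.

Lemma convP (l u v : R) : 0 <= l <= 1 -> 0 <= u -> 0 <= v ->
  (l * u + (1 - l) * v) `^ p <= l * u `^ p + (1 - l) * v `^ p.
Proof.
move=> /andP[l0 l1] u0 v0.
set m := l * u + (1 - l) * v.
have m0 : 0 <= m by rewrite /m addr_ge0 // mulr_ge0 // subr_ge0.
have A := @tangentP R p hp m u m0 u0.
have B := @tangentP R p hp m v m0 v0.
set K := p * m `^ (p - 1) in A B.
have e : l * (u - m) + (1 - l) * (v - m) = 0 by rewrite /m; ring.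
have A' := ler_wpM2l l0 A.
have B' : (1 - l) * (m `^ p + K * (v - m)) <= (1 - l) * v `^ p.
  by apply: ler_wpM2l; rewrite ?subr_ge0.
have e2 : l * (m `^ p + K * (u - m)) + (1 - l) * (m `^ p + K * (v - m)) = m `^ p.
  have -> : l * (m `^ p + K * (u - m)) + (1 - l) * (m `^ p + K * (v - m)) =
    m `^ p + K * (l * (u - m) + (1 - l) * (v - m)) by ring.
  by rewrite e mulr0 addr0.
lra.
Qed.

Lemma normD_same (a b : R) : 0 <= a * b -> `|a + b| = `|a| + `|b|.
Proof.
move=> ab.
have [a0|a0] := lerP 0 a.
  have [b0|b0] := lerP 0 b.
    by rewrite !ger0_norm // addr_ge0.
  have a00 : a = 0 by nra.
  by rewrite a00 add0r normr0 add0r.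
have [b0|b0] := lerP 0 b.
  have b00 : b = 0 by nra.
  by rewrite b00 addr0 normr0 addr0.
rewrite !ltr0_norm //; [lra|lra].
Qed.

Lemma psum_cons (s : seq R) k r :
  psum p s (k :: r) = `| \sum_(y <- take k s) y | `^ p + psum p (drop k s) r.
Proof. by rewrite /psum /= big_cons. Qed.

Lemma psum_nil (s : seq R) : psum p s [::] = 0.
Proof. by rewrite /psum /= big_nil. Qed.

Lemma psum_ge0 (s : seq R) r : 0 <= psum p s r.
Proof. by rewrite /psum; apply: sumr_ge0 => b _; exact: powR_ge0. Qed.

Lemma dropl_cat' (T : Type) k (s1 s2 : seq T) : (k <= size s1)%N ->
  drop k (s1 ++ s2) = drop k s1 ++ s2.
Proof.
move=> h; rewrite drop_cat; case: ltnP => // h2.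
have -> : k = size s1 by apply/eqP; rewrite eqn_leq h h2.
by rewrite subnn drop0 drop_size.
Qed.

Lemma psum_cat (s1 s2 : seq R) r1 r2 : sumn r1 = size s1 ->
  psum p (s1 ++ s2) (r1 ++ r2) = psum p s1 r1 + psum p s2 r2.
Proof.
elim: r1 s1 => [|k r1 IH] s1 /= hs.
  by case: s1 hs => // _; rewrite psum_nil add0r.
have hk : (k <= size s1)%N by rewrite -hs leq_addr.
rewrite !psum_cons takel_cat // dropl_cat' // IH ?addrA //.
by rewrite size_drop -hs addKn.
Qed.

Lemma psum1 (s : seq R) : psum p s [:: size s] = `| \sum_(y <- s) y | `^ p.
Proof. by rewrite psum_cons take_size psum_nil addr0. Qed.

Lemma psum_split (s1 s2 : seq R) r1 : sumn r1 = size s1 ->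
  psum p (s1 ++ s2) (rcons r1 (size s2)) = psum p s1 r1 + `| \sum_(y <- s2) y | `^ p.
Proof. by move=> h; rewrite -cats1 psum_cat // psum1. Qed.

Lemma part_rcons (s1 s2 : seq R) r1 : is_partition (size s1) r1 -> (0 < size s2)%N ->
  is_partition (size (s1 ++ s2)) (rcons r1 (size s2)).
Proof.
rewrite /is_partition => /andP[h1 /eqP h2] h3.
by rewrite all_rcons h3 h1 sumn_rcons h2 size_cat eqxx.
Qed.

Lemma part_last (s : seq R) r : is_partition (size s) r -> (0 < size s)%N ->
  exists r1 s1 s2, [/\ is_partition (size s1) r1, s = s1 ++ s2, (0 < size s2)%N
     & r = rcons r1 (size s2)].
Proof.
rewrite /is_partition => /andP[h1 /eqP h2] hs.
case/lastP: r h1 h2 => [|r1 l] h1 h2; first by rewrite -h2 in hs.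
rewrite all_rcons in h1; case/andP: h1 => hl h1.
rewrite sumn_rcons in h2.
exists r1, (take (sumn r1) s), (drop (sumn r1) s).
have hle : (sumn r1 <= size s)%N by rewrite -h2 leq_addr.
rewrite cat_take_drop size_drop -h2 addKn size_takel // h1 eqxx; split => //.
Qed.

End Helpers2.



Lemma part_fin n : exists L : seq (seq nat),
  forall r, all (fun l => 0 < l)%N r -> (sumn r <= n)%N -> r \in L.
Proof.
elim: n => [|n [L HL]].
  exists [:: [::]] => -[|k r] //= /andP[hk _]; rewrite leqn0 addn_eq0 => /andP[/eqP hk0 _].
  by rewrite hk0 in hk.
exists (L ++ [seq k :: r | k <- iota 1 n.+1, r <- L]) => r hr hs.
rewrite mem_cat; have [hle|hgt] := leqP (sumn r) n; first by rewrite HL.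
apply/orP; right.
case: r hr hs hgt => [|k r] //= /andP[hk hr] hs hgt.
have := @allpairs_f nat (seq nat) (seq nat) (fun k r => k :: r) (iota 1 n.+1) L k r.
apply; first by rewrite mem_iota; lia.
by apply: HL => //; lia.
Qed.

Lemma exists_max (R : realType) (T : eqType) (f : T -> R) (L : seq T) : L != [::] ->
  exists2 a, a \in L & forall b, b \in L -> f b <= f a.
Proof.
elim: L => [//|a L IH] _.
case: L IH => [|a' L] IH.
  by exists a => [|b]; rewrite ?mem_seq1 ?inE // => /eqP ->.
have [c hc hcm] := IH isT.
have [hac|hca] := lerP (f a) (f c).
  exists c; first by rewrite inE hc orbT.
  by move=> b; rewrite inE => /orP[/eqP ->|/hcm].
exists a; first by rewrite inE eqxx.
move=> b; rewrite inE => /orP[/eqP ->//|/hcm hb].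
exact: le_trans hb (ltW hca).
Qed.

Section SP.
Variable R : realType.
Variable p : R.
Hypothesis hp : 1 <= p.

Let p0 : 0 < p. Proof. exact: lt_le_trans ltr01 hp. Qed.

Lemma sp_max (x : seq R) : exists r0, [/\ is_partition (size x) r0,
  sp_pow p x = psum p x r0 & forall r, is_partition (size x) r -> psum p x r <= psum p x r0].
Proof.
have [L HL] := part_fin (size x).
have ne : [seq r <- L | is_partition (size x) r] != [::].
  have : exists r, is_partition (size x) r.
    case: (size x) => [|n]; first by exists [::].
    by exists [:: n.+1]; rewrite /is_partition /= addn0 eqxx.
  case=> r hr; apply/eqP => h.
  have : r \in [seq r <- L | is_partition (size x) r].
    by case/andP: (hr) => h1 /eqP h2; rewrite mem_filter hr HL // h2.
  by rewrite h.
have [r0 hr0 hm] := @exists_max R _ (psum p x) _ ne.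
rewrite mem_filter in hr0; case/andP: hr0 => hr0 _.
have hm' : forall r, is_partition (size x) r -> psum p x r <= psum p x r0.
  move=> r hr; apply: hm; case/andP: (hr) => h1 /eqP h2.
  by rewrite mem_filter hr HL // h2.
exists r0; split => //.
apply/eqP; rewrite eq_le; apply/andP; split.
  apply: ge_sup; first by exists (psum p x r0), r0.
  by move=> v [r [hr ->]]; exact: hm'.
apply: ub_le_sup; last by exists r0.
by exists (psum p x r0) => v [r [hr ->]]; exact: hm'.
Qed.

Lemma sp_ub (x : seq R) r : is_partition (size x) r -> psum p x r <= sp_pow p x.
Proof.
have [r0 [_ -> hm]] := sp_max x; exact: hm.
Qed.

Lemma sp_ge0 (x : seq R) : 0 <= sp_pow p x.
Proof. have [r0 [_ -> _]] := sp_max x; exact: psum_ge0. Qed.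

Lemma spE (x : seq R) : s_p p x `^ p = sp_pow p x.
Proof.
by rewrite /s_p -powRrM mulVf ?gt_eqF // powRr1 // sp_ge0.
Qed.

Lemma psum_rev (x : seq R) r : sumn r = size x ->
  psum p (rev x) (rev r) = psum p x r.
Proof.
move=> h; rewrite /psum -[in RHS]big_rev rev_reshape ?h // big_map.
by apply: eq_bigr => b _; rewrite big_rev.
Qed.

Lemma part_rev n r : is_partition n (rev r) = is_partition n r.
Proof. by rewrite /is_partition all_rev sumn_rev. Qed.

Lemma sp_rev_le (x : seq R) : sp_pow p (rev x) <= sp_pow p x.
Proof.
have [r0 [hr0 -> _]] := sp_max (rev x).
rewrite -(revK r0) psum_rev; last first.
  by rewrite sumn_rev; case/andP: hr0 => _ /eqP ->; rewrite size_rev.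
by apply: sp_ub; rewrite part_rev -(size_rev x).
Qed.

Lemma sp_rev (x : seq R) : sp_pow p (rev x) = sp_pow p x.
Proof.
apply/eqP; rewrite eq_le sp_rev_le /=.
by rewrite -{1}(revK x) sp_rev_le.
Qed.

End SP.



Lemma mono_of_convex (R : realType) (f : R -> R) : convex_fun f -> (forall t, f 0 <= f t) ->
  decr_neg f /\ incr_pos f.
Proof.
move=> hc h0; split.
  move=> a b hab hb.
  have [a0|a0] := eqVneq a 0.
    have -> : b = a by apply/eqP; rewrite eq_le hab a0 hb.
    exact: lexx.
  have al : a < 0 by rewrite lt_neqAle a0 (le_trans hab hb).
  set l := b / a.
  have l0 : 0 <= l by rewrite /l ler_ndivlMr // mul0r.
  have l1 : l <= 1 by rewrite /l ler_ndivrMr // mul1r.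
  have e : l * a + (1 - l) * 0 = b by rewrite mulr0 addr0 /l mulfVK.
  have := hc a 0 l; rewrite l0 l1 e => /(_ isT) H.
  have := h0 a => H0.
  have : (1 - l) * f 0 <= (1 - l) * f a by apply: ler_wpM2l; rewrite ?subr_ge0.
  lra.
move=> a b ha hab.
have [b0|b0] := eqVneq b 0.
  have -> : a = b by apply/eqP; rewrite eq_le hab b0 ha.
  exact: lexx.
have bl : 0 < b by rewrite lt_neqAle eq_sym b0 (le_trans ha hab).
set l := a / b.
have l0 : 0 <= l by rewrite /l divr_ge0 // ltW.
have l1 : l <= 1 by rewrite /l ler_pdivrMr // mul1r.
have e : l * b + (1 - l) * 0 = a by rewrite mulr0 addr0 /l mulfVK // gt_eqF.
have := hc b 0 l; rewrite l0 l1 e => /(_ isT) H.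
have := h0 b => H0.
have : (1 - l) * f 0 <= (1 - l) * f b by apply: ler_wpM2l; rewrite ?subr_ge0.
lra.
Qed.

Section Main.
Variable R : realType.
Variable p : R.
Hypothesis hp : 1 <= p.

Let p0 : 0 < p. Proof. exact: lt_le_trans ltr01 hp. Qed.

Lemma sum_rcons (s : seq R) t : \sum_(y <- rcons s t) y = \sum_(y <- s) y + t.
Proof. by rewrite -cats1 big_cat big_seq1. Qed.

Lemma decomp (x : seq R) t r : is_partition (size (rcons x t)) r ->
  exists r1 s1 s2, [/\ is_partition (size s1) r1, x = s1 ++ s2,
    r = rcons r1 (size (rcons s2 t)) &
    psum p (rcons x t) r = psum p s1 r1 + `| \sum_(y <- s2) y + t | `^ p].
Proof.
move=> hr.
have [r1 [s1 [s2 [h1 e hs2 ->]]]] := @part_last R _ _ hr (ltac:(by rewrite size_rcons)).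
case/lastP: s2 e hs2 => [//|s2 u] e _.
move: e; rewrite -rcons_cat => /rcons_inj [-> <-].
exists r1, s1, s2; split => //.
rewrite rcons_cat psum_split ?sum_rcons //.
by case/andP: h1 => _ /eqP.
Qed.

Lemma psum_rc (s1 s2 : seq R) r1 t : is_partition (size s1) r1 ->
  psum p s1 r1 + `| \sum_(y <- s2) y + t | `^ p <= sp_pow p (rcons (s1 ++ s2) t).
Proof.
move=> h; have h' : sumn r1 = size s1 by case/andP: h => _ /eqP.
rewrite rcons_cat -sum_rcons -psum_split //.
apply: sp_ub => //; apply: part_rcons => //; by rewrite size_rcons.
Qed.

Lemma sp_rcons_ge (x : seq R) y : sp_pow p x + `|y| `^ p <= sp_pow p (rcons x y).
Proof.
have [r0 [hr0 -> _]] := @sp_max R p x.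
have := @psum_rc x [::] r0 y hr0; by rewrite cats0 big_nil add0r.
Qed.

Lemma sp_rcons0 (x : seq R) : sp_pow p (rcons x 0) <= sp_pow p x.
Proof.
have [r0 [hr0 -> _]] := @sp_max R p (rcons x 0).
have [r1 [s1 [s2 [h1 -> -> ->]]]] := @decomp _ _ _ hr0.
rewrite addr0.
case/lastP: s2 => [|s2 u].
  by rewrite cats0 big_nil normr0 powR0 ?gt_eqF // addr0; apply: sp_ub.
have h' : sumn r1 = size s1 by case/andP: h1 => _ /eqP.
rewrite -psum_split //; apply: sp_ub => //; apply: part_rcons => //; by rewrite size_rcons.
Qed.

Lemma sp_convex (x : seq R) : convex_fun (fun t => sp_pow p (rcons x t)).
Proof.
move=> a b l /andP[l0 l1] /=.
set m := l * a + (1 - l) * b.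
have [r0 [hr0 -> _]] := @sp_max R p (rcons x m).
have [r1 [s1 [s2 [h1 -> -> ->]]]] := @decomp _ _ _ hr0.
have Ha := @psum_rc s1 s2 r1 a h1.
have Hb := @psum_rc s1 s2 r1 b h1.
set S := \sum_(y <- s2) y in Ha Hb *.
have n1 : `|S + m| <= l * `|S + a| + (1 - l) * `|S + b|.
  have -> : S + m = l * (S + a) + (1 - l) * (S + b) by rewrite /m; ring.
  apply: le_trans (ler_normD _ _) _.
  have l1' : 0 <= 1 - l by rewrite subr_ge0.
  by rewrite !normrM (ger0_norm l0) (ger0_norm l1').
have n2 : `|S + m| `^ p <= (l * `|S + a| + (1 - l) * `|S + b|) `^ p.
  apply: (ge0_ler_powR (ltW p0)) => //; rewrite ?nnegrE //.
  exact: le_trans (normr_ge0 _) n1.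
have n3 := @convP R p hp l _ _ (ltac:(by rewrite l0 l1)) (normr_ge0 (S + a)) (normr_ge0 (S + b)).
have Ha' := ler_wpM2l l0 Ha.
have Hb' : (1 - l) * (psum p s1 r1 + `|S + b| `^ p) <= (1 - l) * sp_pow p (rcons (s1 ++ s2) b).
  by apply: ler_wpM2l; rewrite ?subr_ge0.
lra.
Qed.

Lemma sp_mono (x : seq R) :
  decr_neg (fun t => sp_pow p (rcons x t)) /\ incr_pos (fun t => sp_pow p (rcons x t)).
Proof.
apply: mono_of_convex; first exact: sp_convex.
move=> t /=; apply: le_trans (sp_rcons0 x) _.
apply: le_trans (sp_rcons_ge x t); rewrite lerDl; exact: powR_ge0.
Qed.

End Main.



Section E.
Variable R : realType.
Variable p : R.
Hypothesis hp : 1 <= p.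

Let p0 : 0 < p. Proof. exact: lt_le_trans ltr01 hp. Qed.

Lemma powle (a b : R) : 0 <= a -> a <= b -> a `^ p <= b `^ p.
Proof.
move=> a0 ab; apply: (ge0_ler_powR (ltW p0)) => //; rewrite nnegrE //.
exact: le_trans ab.
Qed.

Lemma key_num (c xn y : R) : xn != 0 -> 0 <= xn * y ->
  `|c| `^ p + `|xn| `^ p <= `|c + xn| `^ p ->
  p * `|xn| `^ (p - 1) * `|y| <= `|c + xn + y| `^ p - `|c + xn| `^ p.
Proof.
move=> xn0 xy H.
have hxx : 0 < xn * xn.
  by case: (ltgtP xn 0) => h; [nra|nra|rewrite h eqxx in xn0].
have cx : 0 <= c * xn.
  rewrite leNgt; apply/negP => hneg.
  have : `|c + xn| <= `|c| \/ `|c + xn| <= `|xn|.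
    have [hc|hc] := lerP 0 c; have [hx|hx] := lerP 0 xn;
    have [hs|hs] := lerP 0 (c + xn);
    rewrite ?(ger0_norm hc) ?(ltr0_norm hc) ?(ger0_norm hx) ?(ltr0_norm hx)
            ?(ger0_norm hs) ?(ltr0_norm hs); try (by left; nra); try (by right; nra);
    nra.
  have c0 : 0 < `|c| by rewrite normr_gt0; apply/eqP => h; rewrite h mul0r ltxx in hneg.
  have x0 : 0 < `|xn| by rewrite normr_gt0.
  case=> h.
    have := powle _ _ (normr_ge0 (c + xn)) h.
    have := powR_gt0 p x0; lra.
  have := powle _ _ (normr_ge0 (c + xn)) h.
  have := powR_gt0 p c0; lra.
have cy : 0 <= c * y by nra.
have By : 0 <= (c + xn) * y by nra.
rewrite (@normD_same R _ _ By).
have nB : `|c + xn| = `|c| + `|xn| := @normD_same R _ _ cx.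
have T := @tangentP R p hp `|c + xn| (`|c + xn| + `|y|) (normr_ge0 _) (addr_ge0 (normr_ge0 _) (normr_ge0 _)).
have M : `|xn| `^ (p - 1) <= `|c + xn| `^ (p - 1).
  apply: ge0_ler_powR; rewrite ?nnegrE ?subr_ge0 //.
  by rewrite nB lerDr.
have M2 : p * `|xn| `^ (p - 1) * `|y| <= p * `|c + xn| `^ (p - 1) * `|y|.
  apply: ler_wpM2r => //; apply: ler_wpM2l => //; exact: ltW.
have e3 : `|c + xn| + `|y| - `|c + xn| = `|y| by ring.
rewrite e3 in T.
lra.
Qed.

Lemma head_rev (x : seq R) : head 0 x = last 0 (rev x).
Proof. by case: x => [//|a s]; rewrite rev_cons last_rcons. Qed.

Lemma part2 (x : seq R) (y : R) :
     sp_pow p (rcons x y) - sp_pow p x >= `|y| `^ p /\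
     (0 <= last 0 x * y ->
        sp_pow p (rcons x y) - sp_pow p x
          >= p * `|last 0 x| `^ (p - 1) * `|y|).
Proof.
have H1 := @sp_rcons_ge R p x y.
split; first lra.
move=> hxy.
have [p1e|p1] := eqVneq p 1.
  rewrite p1e subrr powRr0 !mul1r; move: H1; rewrite p1e powRr1 //; lra.
have [xn0|xn0] := eqVneq (last 0 x) 0.
  rewrite xn0 normr0 powR0 ?subr_eq0 // mulr0 mul0r.
  have := powR_ge0 `|y| p; lra.
have [r0 [hr0 e _]] := @sp_max R p x.
have hx : (0 < size x)%N by move: xn0; case: (x) => [|a s] //=; rewrite eqxx.
have [r1 [s1 [s2 [h1 ex hs2 er0]]]] := @part_last R _ _ hr0 hx.
have h1' : sumn r1 = size s1 by case/andP: h1 => _ /eqP.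
case/lastP: s2 ex hs2 er0 => [//|s2 xn] ex _ er0.
have exn : last 0 x = xn by rewrite ex last_cat last_rcons.
rewrite exn in hxy xn0 *.
have eSP : sp_pow p x = psum p s1 r1 + `|\sum_(y <- s2) y + xn| `^ p.
  by rewrite e ex er0 psum_split // sum_rcons.
have G := @psum_rc R p s1 (rcons s2 xn) r1 y h1.
rewrite -ex sum_rcons in G.
have Hc : `|\sum_(y <- s2) y| `^ p + `|xn| `^ p <= `|\sum_(y <- s2) y + xn| `^ p.
  case: s2 ex er0 eSP G => [|a s2'] ex er0 eSP G.
    by rewrite big_nil normr0 powR0 ?gt_eqF // !add0r.
  have P := @psum_rc R p (s1 ++ a :: s2') [::] (rcons r1 (size (a :: s2'))) xn
    (@part_rcons R _ (a :: s2') _ h1 (ltn0Sn _)).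
  rewrite cats0 big_nil add0r psum_split // rcons_cat -ex in P.
  lra.
set c := \sum_(y <- s2) y in eSP G Hc.
have K := key_num c xn y xn0 hxy Hc.
lra.
Qed.

End E.



Theorem proposition2p2 (R : realType) (p : R) (hp : 1 <= p) :
  (* (1) *)
  (forall x : seq R, (0 < size x)%N ->
     let f := fun t => s_p p (rcons x t) `^ p in
     [/\ convex_fun f, decr_neg f & incr_pos f]) /\
  (* (2) *)
  (forall (x : seq R) (y : R), (0 < size x)%N ->
     s_p p (rcons x y) `^ p - s_p p x `^ p >= `|y| `^ p /\
     (0 <= last 0 x * y ->
        s_p p (rcons x y) `^ p - s_p p x `^ p
          >= p * `|last 0 x| `^ (p - 1) * `|y|)) /\
  (* (3) *)
  (forall x : seq R, (0 < size x)%N ->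
     let f := fun t => s_p p (t :: x) `^ p in
     [/\ convex_fun f, decr_neg f & incr_pos f]) /\
  (forall (x : seq R) (x0 : R), (0 < size x)%N ->
     s_p p (x0 :: x) `^ p - s_p p x `^ p >= `|x0| `^ p /\
     (0 <= x0 * head 0 x ->
        s_p p (x0 :: x) `^ p - s_p p x `^ p
          >= p * `|head 0 x| `^ (p - 1) * `|x0|)).
Proof.
have sE := @spE R p hp.
split.
  move=> x _ f.
  have -> : f = (fun t => sp_pow p (rcons x t)) by apply: funext => t; rewrite /f sE.
  have [h1 h2] := @sp_mono R p hp x.
  by split => //; exact: (@sp_convex R p hp x).
split.
  by move=> x y _; rewrite !sE; exact: (@part2 R p hp x y).
split.
  move=> x _ f.
  have -> : f = (fun t => sp_pow p (rcons (rev x) t)).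
    by apply: funext => t; rewrite /f sE -(@sp_rev R p (t :: x)) rev_cons.
  have [h1 h2] := @sp_mono R p hp (rev x).
  by split => //; exact: (@sp_convex R p hp (rev x)).
move=> x x0 _; rewrite !sE -(@sp_rev R p (x0 :: x)) -(@sp_rev R p x) rev_cons.
rewrite (@head_rev R x) mulrC; exact: (@part2 R p hp (rev x) x0).
Qed.
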